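(* Let $p\geq 2$ and let $a,b$ be positive integers. (i) Suppose $\mathcal{S}$ is a $p$-qubit UPB and $i\in\{1,\dots,p\}$ is a qubit on which only one orthonormal basis $\{|u\rangle,|u^\perp\rangle\}$ of $\mathbb{C}^2$ is used, i.e. the $i$-th tensor factor of every element of $\mathcal{S}$ is a scalar multiple of $|u\rangle$ or of $|u^\perp\rangle$, with exactly $a$ elements of the first kind and $b$ of the second (so the orthogonality graph of qubit $i$ is the complete bipartite graph $K_{a,b}$). Then the set obtained from the $a$ elements of the first kind by deleting their $i$-th tensor factor is a $(p-1)$-qubit UPB of size $a$, and likewise the $b$ elements of the second kind give a $(p-1)$-qubit UPB of size $b$. (ii) Conversely, if there exist $(p-1)$-qubit UPBs of sizes $a$ and $b$, then there exists a $p$-qubit UPB of size $a+b$ in which only one orthonormal basis of $\mathbb{C}^2$ is used on some qubit, with $a$ states having one basis vector and $b$ states having the other on that qubit.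
   Context: A product state in $(\mathbb{C}^2)^{\otimes p}$ is a vector $|v_1\rangle\otimes\cdots\otimes|v_p\rangle$ with each $|v_j\rangle\in\mathbb{C}^2$. A $p$-qubit unextendible product basis (UPB) is a finite set $\mathcal{S}\subseteq(\mathbb{C}^2)^{\otimes p}$ of unit product vectors that are pairwise orthogonal, such that no nonzero product vector outside $\mathcal{S}$ is orthogonal to every element of $\mathcal{S}$. The orthogonality graph of qubit $\ell$ for a set of product states is the graph whose vertices are the states, with an edge between two states iff their $\ell$-th tensor factors are orthogonal. *)

(* Defs.v *)
From HB Require Import structures.
From mathcomp Require Import all_boot all_order all_algebra.
Set Implicit Arguments. Unset Strict Implicit. Unset Printing Implicit Defensive.
Import Order.TTheory GRing.Theory Num.Theory.
Local Open Scope ring_scope.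

Section QubitDefs.
Variable C : numClosedFieldType.

Definition qubit := 'I_2 -> C.

Definition dot2 (u v : qubit) : C := \sum_(k < 2) (u k)^* * v k.

Definition onb2 (u w : qubit) : Prop :=
  dot2 u u = 1 /\ dot2 w w = 1 /\ dot2 u w = 0.

(* Computational basis labels of (C^2)^{\otimes p}. *)
Definition cbasis (p : nat) := {ffun 'I_p -> 'I_2}.

(* A vector of (C^2)^{\otimes p}, given by its coordinates in the
   computational basis. *)
Definition state (p : nat) := {ffun cbasis p -> C}.

Definition dotS p (v w : state p) : C := \sum_(x : cbasis p) (v x)^* * w x.

Definition tensor p (f : 'I_p -> qubit) : state p :=
  [ffun x : cbasis p => \prod_(j < p) f j (x j)].

Definition has_factors p (v : state p) (f : 'I_p -> qubit) : Prop :=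
  v = tensor f.

Definition is_product p (v : state p) : Prop := exists f, has_factors v f.

Definition nonzero p (v : state p) : Prop := exists x, v x != 0.

(* Unextendible product basis (the finite set S is given as a
   duplicate-free sequence). *)
Definition UPB p (S : seq (state p)) : Prop :=
  [/\ uniq S,
      (forall v, v \in S -> is_product v /\ dotS v v = 1),
      (forall v w, v \in S -> w \in S -> v != w -> dotS v w = 0) &
      (forall w, is_product w -> nonzero w -> w \notin S ->
         ~ (forall v, v \in S -> dotS v w = 0))].

Definition factor_along p (i : 'I_p) (u : qubit) (v : state p) : Prop :=
  exists f, has_factors v f /\ exists c : C, forall k, f i k = c * u k.

Definition ins p (i : 'I_p) (k : 'I_2) (y : cbasis p.-1) : cbasis p :=
  [ffun j => match unlift i j with Some j' => y j' | None => k end].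

(* Contraction of qubit i of v with the unit vector u, i.e. <u|_i v.
   For v = (..) (x) u (x) (..) with u at position i, this is exactly the
   vector obtained by deleting the i-th tensor factor. *)
Definition contract p (i : 'I_p) (u : qubit) (v : state p) : state p.-1 :=
  [ffun y : cbasis p.-1 => \sum_(k < 2) (u k)^* * v (ins i k y)].

End QubitDefs.

(* Main.v *)
Require Import Defs.
From HB Require Import structures.
From mathcomp Require Import all_boot all_order all_algebra.
Import Order.TTheory GRing.Theory Num.Theory.
Local Open Scope ring_scope.
Set Implicit Arguments. Unset Strict Implicit. Unset Printing Implicit Defensive.

Section Aux.
Variable C : numClosedFieldType.

Definition del p (i : 'I_p) (x : cbasis p) : cbasis p.-1 :=
  [ffun j => x (lift i j)].

Definition emb p (i : 'I_p) (q : qubit C) (v : state C p.-1) : state C p :=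
  [ffun x : cbasis p => q (x i) * v (del i x)].

Lemma ins_at p (i : 'I_p) (k : 'I_2) (y : cbasis p.-1) : (ins i k y) i = k.
Proof. by rewrite ffunE unlift_none. Qed.

Lemma ins_lift p (i : 'I_p) (k : 'I_2) (y : cbasis p.-1) j : ins i k y (lift i j) = y j.
Proof. by rewrite ffunE liftK. Qed.

Lemma del_ins p (i : 'I_p) (k : 'I_2) (y : cbasis p.-1) : del i (ins i k y) = y.
Proof. by apply/ffunP => j; rewrite ffunE ins_lift. Qed.

Lemma ins_del p (i : 'I_p) (x : cbasis p) : ins i (x i) (del i x) = x.
Proof.
apply/ffunP => j; rewrite ffunE; case: unliftP => [j' ->|->] //.
by rewrite ffunE.
Qed.

Lemma sum_split p (i : 'I_p) (F : cbasis p -> C) :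
  \sum_(x : cbasis p) F x = \sum_(k < 2) \sum_(y : cbasis p.-1) F (ins i k y).
Proof.
rewrite pair_big /=.
rewrite (reindex (fun z : 'I_2 * cbasis p.-1 => ins i z.1 z.2)) //=.
apply: onW_bij; exists (fun x : cbasis p => (x i, del i x)).
  by case=> k y /=; rewrite ins_at del_ins.
by move=> x /=; rewrite ins_del.
Qed.

Lemma tensor_ins p (i : 'I_p) (f : 'I_p -> qubit C) (k : 'I_2) (y : cbasis p.-1) :
  tensor f (ins i k y) = f i k * tensor (fun j => f (lift i j)) y.
Proof.
rewrite !ffunE (bigD1_ord i) //= ins_at; congr (_ * _).
by apply: eq_bigr => j _; rewrite ins_lift.
Qed.

Lemma emb_ins p (i : 'I_p) (q : qubit C) (v : state C p.-1) (k : 'I_2) (y : cbasis p.-1) : emb i q v (ins i k y) = q k * v y.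
Proof. by rewrite ffunE ins_at del_ins. Qed.

Lemma emb_tensor p (i : 'I_p) (q : qubit C) (g : 'I_p.-1 -> qubit C) :
  emb i q (tensor g) =
  tensor (fun j => match unlift i j with Some j' => g j' | None => q end).
Proof.
apply/ffunP => x; rewrite -[in RHS](ins_del i x) tensor_ins unlift_none ffunE.
congr (_ * _); rewrite !ffunE; apply: eq_bigr => j _.
by rewrite liftK.
Qed.

Lemma dot_sep p (i : 'I_p) (v w : state C p) (v' w' : state C p.-1) (q r : qubit C) :
  (forall k y, v (ins i k y) = q k * v' y) ->
  (forall k y, w (ins i k y) = r k * w' y) ->
  dotS v w = dot2 q r * dotS v' w'.
Proof.
move=> Hv Hw; rewrite /dotS (sum_split i) /dot2 big_distrl /=.
apply: eq_bigr => k _; rewrite big_distrr; apply: eq_bigr => y _.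
by rewrite Hv Hw rmorphM /= mulrACA.
Qed.

Lemma contract_sep p (i : 'I_p) (v : state C p) (v' : state C p.-1) (q u : qubit C) (y : cbasis p.-1) :
  (forall k y, v (ins i k y) = q k * v' y) ->
  contract i u v y = dot2 u q * v' y.
Proof.
move=> Hv; rewrite ffunE /dot2 big_distrl; apply: eq_bigr => k _.
by rewrite Hv mulrA.
Qed.

Lemma scale_prod n (j0 : 'I_n) (c : C) (g : 'I_n -> qubit C) :
  is_product [ffun y => c * tensor g y].
Proof.
exists (fun j => if j == j0 then (fun k => c * g j k) else g j).
apply/ffunP => y; rewrite !ffunE (bigD1 j0) //= (bigD1 j0 (P := predT)) //=.
rewrite eqxx mulrA; congr (_ * _).
by apply: eq_bigr => j /negbTE ->.
Qed.

Lemma dot2C (u w : qubit C) : dot2 u w = (dot2 w u)^*.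
Proof.
rewrite /dot2 rmorph_sum; apply: eq_bigr => k _.
by rewrite rmorphM /= conjCK mulrC.
Qed.

Lemma dot2_e (k0 : 'I_2) (r : qubit C) : dot2 (fun k => (k == k0)%:R) r = r k0.
Proof.
rewrite /dot2 (bigD1 k0) //= eqxx conjC1 mul1r big1 ?addr0 //.
by move=> k /negbTE ->; rewrite conjC0 mul0r.
Qed.


Lemma along_sep p (hp : (1 < p)%N) (i : 'I_p) (u : qubit C) (v : state C p) :
  dot2 u u = 1 -> factor_along i u v ->
  (forall k y, v (ins i k y) = u k * contract i u v y) /\
  is_product (contract i u v).
Proof.
move=> uu [f [-> [c Hc]]].
set v' := [ffun y : cbasis p.-1 => c * tensor (fun j => f (lift i j)) y].
have Hs : forall k y, tensor f (ins i k y) = u k * v' y.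
  by move=> k y; rewrite tensor_ins Hc /v' !ffunE -mulrA mulrCA.
have Hc' : contract i u (tensor f) = v'.
  by apply/ffunP => y; rewrite (contract_sep u y Hs) uu mul1r.
rewrite Hc'; split => //.
have hp' : (0 < p.-1)%N by rewrite -subn1 subn_gt0.
exact: (scale_prod (Ordinal hp')).
Qed.

Lemma part1 p (hp : (1 < p)%N) (S : seq (state C p)) (i : 'I_p) (u w : qubit C)
    (S1 S2 : seq (state C p)) :
  UPB S -> onb2 u w -> perm_eq S (S1 ++ S2) ->
  (forall v, v \in S1 -> factor_along i u v) ->
  (forall v, v \in S2 -> factor_along i w v) ->
  UPB (map (contract i u) S1).
Proof.
case=> uS nS oS xS [uu [ww uw]] pS H1 H2.
have wu : dot2 w u = 0 by rewrite dot2C uw conjC0.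
have inS : forall v, (v \in S) = (v \in S1) || (v \in S2).
  by move=> v; rewrite (perm_mem pS) mem_cat.
have sep1 := fun v (h : v \in S1) => along_sep hp uu (H1 v h).
have sep2 := fun v (h : v \in S2) => along_sep hp ww (H2 v h).
have inj1 : {in S1 &, injective (contract i u)}.
  move=> v1 v2 h1 h2 E; apply/ffunP => x; rewrite -(ins_del i x).
  by rewrite (sep1 _ h1).1 (sep1 _ h2).1 E.
have uS1 : uniq S1 by move: uS; rewrite (perm_uniq pS) cat_uniq => /and3P[].
have dot1 : forall v1 v2, v1 \in S1 -> v2 \in S1 ->
    dotS v1 v2 = dotS (contract i u v1) (contract i u v2).
  by move=> v1 v2 h1 h2; rewrite (dot_sep (sep1 _ h1).1 (sep1 _ h2).1) uu mul1r.
split.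
- by rewrite map_inj_in_uniq.
- move=> v' /mapP[v h ->]; split; first exact: (sep1 _ h).2.
  have vS : v \in S by rewrite inS h.
  by rewrite -dot1 // (nS v vS).2.
- move=> v1' v2' /mapP[v1 h1 ->] /mapP[v2 h2 ->] ne.
  rewrite -dot1 // oS ?inS ?h1 ?h2 //.
  by apply: contraNneq ne => ->.
- move=> w0 [g ->] [y wy] _ Horth.
  have [k uk] : exists k, u k != 0.
    case: (pickP (fun k => u k != 0)) => [k uk|H]; first by exists k.
    move: uu; rewrite /dot2 big1; first by move/eqP; rewrite eq_sym oner_eq0.
    move=> k _; by have := H k; rewrite /= => /negbFE/eqP ->; rewrite mulr0.
  set W := emb i u (tensor g).
  have sW : forall k y, W (ins i k y) = u k * tensor g y.
    by move=> k' y'; rewrite emb_ins.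
  have oW : forall v, v \in S -> dotS v W = 0.
    move=> v; rewrite inS => /orP[h|h].
      rewrite (dot_sep (sep1 _ h).1 sW) uu mul1r; apply: Horth; exact: map_f.
    by rewrite (dot_sep (sep2 _ h).1 sW) wu mul0r.
  apply: (xS W).
  + by rewrite /W; eexists; apply: emb_tensor.
  + by exists (ins i k y); rewrite sW mulf_neq0.
  + apply/negP => WS; have := (nS W WS).2; rewrite oW // => /eqP.
    by rewrite eq_sym oner_eq0.
  + exact: oW.
Qed.

Lemma noext p (T : seq (state C p)) (R : state C p) (d : C) :
  UPB T -> is_product R -> nonzero R -> d != 0 ->
  (forall t, t \in T -> d * dotS t R = 0) -> False.
Proof.
case=> _ nT _ xT pR nzR d0 H.
have H' : forall t, t \in T -> dotS t R = 0.
  by move=> t h; move/eqP: (H t h); rewrite mulf_eq0 (negbTE d0) => /eqP.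
apply: (xT R pR nzR) => //.
apply/negP => RT; have := (nT R RT).2; rewrite H' // => /eqP.
by rewrite eq_sym oner_eq0.
Qed.

End Aux.

Theorem lemmaA1 (C : numClosedFieldType) (p : nat) (hp : (2 <= p)%N)
    (a b : nat) (ha : (0 < a)%N) (hb : (0 < b)%N) :
  (* (i) *)
  (forall (S : seq (state C p)) (i : 'I_p) (u w : qubit C)
          (S1 S2 : seq (state C p)),
     UPB S -> onb2 u w ->
     perm_eq S (S1 ++ S2) ->
     (forall v, v \in S1 -> factor_along i u v) ->
     (forall v, v \in S2 -> factor_along i w v) ->
     size S1 = a -> size S2 = b ->
     (UPB (map (contract i u) S1) /\ size (map (contract i u) S1) = a) /\
     (UPB (map (contract i w) S2) /\ size (map (contract i w) S2) = b))
  /\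
  (* (ii) *)
  ((exists T1 : seq (state C p.-1), UPB T1 /\ size T1 = a) ->
   (exists T2 : seq (state C p.-1), UPB T2 /\ size T2 = b) ->
   exists S : seq (state C p),
     UPB S /\ size S = (a + b)%N /\
     exists (i : 'I_p) (u w : qubit C) (S1 S2 : seq (state C p)),
       [/\ onb2 u w, perm_eq S (S1 ++ S2), size S1 = a, size S2 = b &
           (forall v, v \in S1 -> factor_along i u v) /\
           (forall v, v \in S2 -> factor_along i w v)]).
Proof.
split.
  move=> S i u w S1 S2 HS Honb pS H1 H2 s1 s2; case: (Honb) => uu [ww uw].
  split; split; rewrite ?size_map //.
    exact: (part1 hp HS Honb pS H1 H2).
  apply: (part1 hp HS _ _ H2 H1).
    by split => //; split => //; rewrite dot2C uw conjC0.
  by rewrite (perm_trans pS) // perm_catC.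
move=> [T1 [HT1 s1]] [T2 [HT2 s2]].
pose i : 'I_p := Ordinal (ltnW hp).
pose e0 : qubit C := fun k => (k == ord0)%:R.
pose e1 : qubit C := fun k => (k == ord_max)%:R.
have d00 : dot2 e0 e0 = 1 by rewrite /e0 dot2_e /= ?eqxx.
have d11 : dot2 e1 e1 = 1 by rewrite /e1 dot2_e /= ?eqxx.
have d01 : dot2 e0 e1 = 0 by rewrite /e0 dot2_e /e1.
have d10 : dot2 e1 e0 = 0 by rewrite /e1 dot2_e /e0.
set S1 := map (emb i e0) T1; set S2 := map (emb i e1) T2.
have demb : forall q r (t t' : state C p.-1),
    dotS (emb i q t) (emb i r t') = dot2 q r * dotS t t'.
  by move=> q r t t'; apply: dot_sep; apply: emb_ins.
case: (HT1) => uT1 nT1 oT1 xT1; case: (HT2) => uT2 nT2 oT2 xT2.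
have inj : forall (q : qubit C) k, q k = 1 -> injective (emb i q).
  move=> q k qk t t' E; apply/ffunP => y.
  have := congr1 (fun f : state C p => f (ins i k y)) E.
  by rewrite /= !emb_ins qk !mul1r.
have nS : forall v, v \in S1 ++ S2 -> dotS v v = 1.
  move=> v; rewrite mem_cat => /orP[/mapP[t h ->]|/mapP[t h ->]]; rewrite demb.
    by rewrite d00 mul1r (nT1 t h).2.
  by rewrite d11 mul1r (nT2 t h).2.
have cross : forall v v', v \in S1 -> v' \in S2 -> dotS v v' = 0 /\ dotS v' v = 0.
  by move=> _ _ /mapP[t h ->] /mapP[t' h' ->]; rewrite !demb d01 d10 !mul0r.
have prod : forall q (t : state C p.-1), is_product t -> is_product (emb i q t).
  by move=> q t [g ->]; eexists; apply: emb_tensor.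
have u1 : uniq S1.
  rewrite map_inj_uniq //; apply: (@inj e0 ord0); by rewrite /e0 eqxx.
have u2 : uniq S2.
  rewrite map_inj_uniq //; apply: (@inj e1 ord_max); by rewrite /e1 eqxx.
exists (S1 ++ S2); split; last split.
- split.
  + rewrite cat_uniq u1 u2 andbT /=; apply/hasPn => v h2; apply/negP => h1.
    have := (cross v v h1 h2).1; rewrite nS ?mem_cat ?h1 // => /eqP.
    by rewrite oner_eq0.
  + move=> v h; split; last exact: nS.
    move: h; rewrite mem_cat => /orP[/mapP[t h ->]|/mapP[t h ->]]; apply: prod.
      exact: (nT1 t h).1.
    exact: (nT2 t h).1.
  + move=> v v'; rewrite !mem_cat => /orP[] h /orP[] h' ne.
    * move: h h' ne => /mapP[t h ->] /mapP[t' h' ->] ne.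
      rewrite demb d00 mul1r oT1 //; by apply: contraNneq ne => ->.
    * exact: (cross _ _ h h').1.
    * exact: (cross _ _ h' h).2.
    * move: h h' ne => /mapP[t h ->] /mapP[t' h' ->] ne.
      rewrite demb d11 mul1r oT2 //; by apply: contraNneq ne => ->.
  + move=> W [g ->] [x Wx] _ Horth.
    set R := tensor (fun j => g (lift i j)).
    have sW : forall k y, tensor g (ins i k y) = g i k * R y.
      by move=> k y; rewrite tensor_ins.
    have pR : is_product R by eexists.
    move: Wx; rewrite -(ins_del i x) sW mulf_eq0 negb_or => /andP[gk Ry].
    have nzR : nonzero R by exists (del i x).
    move: gk; case: (x i) => [[|[|//]] Hk] gk.
      have E : Ordinal Hk = ord0 by apply/val_inj.
      rewrite E in gk; apply: (noext HT1 pR nzR gk) => t h.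
      have := Horth (emb i e0 t); rewrite mem_cat map_f //= => /(_ isT).
      by rewrite (dot_sep (emb_ins i e0 t) sW) /e0 dot2_e.
    have E : Ordinal Hk = ord_max by apply/val_inj.
    rewrite E in gk; apply: (noext HT2 pR nzR gk) => t h.
    have := Horth (emb i e1 t); rewrite mem_cat map_f ?orbT //= => /(_ isT).
    by rewrite (dot_sep (emb_ins i e1 t) sW) /e1 dot2_e.
- by rewrite size_cat !size_map s1 s2.
exists i, e0, e1, S1, S2; split;
  [by split; [|split] | by [] | by rewrite size_map | by rewrite size_map |].
split => v /mapP[t h ->].
  case: (nT1 t h).1 => g ->.
  exists (fun j => match unlift i j with Some j' => g j' | None => e0 end).
  split; first exact: emb_tensor.
  by exists 1 => k; rewrite unlift_none mul1r.
case: (nT2 t h).1 => g ->.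
exists (fun j => match unlift i j with Some j' => g j' | None => e1 end).
split; first exact: emb_tensor.
by exists 1 => k; rewrite unlift_none mul1r.
Qed.
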